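(* Let $\mathcal{C}$ be a closed assembler and $\mathcal{D}$ a subassembler which is a sieve in $\mathcal{C}$, and suppose that $\mathcal{C}$ has complements for all objects of $\mathcal{D}$. Let $\{f_i:A_i\to B\}_{i\in I}$ be a finite collection of morphisms in $\mathcal{C}$ such that $A_i\times_BA_{i'}\in\mathcal{D}$ for all $i\neq i'$. Then there exists a morphism $g:\{Z_k\}_{k\in K}\to\{A_i\}_{i\in I}$ in $\mathcal{W}(\mathcal{C})$ such that for all $k\neq k'$ in $K$ the morphisms $f_{g(k)}g_k$ and $f_{g(k')}g_{k'}$ are either equal or disjoint, and if they are equal then $g(k)\neq g(k')$.
   Context: An assembler is a small category with a Grothendieck topology satisfying: (I) there is an initial object $\varnothing$ covered by the empty family; (R) any two finite disjoint covering families of an object have a common refinement which is a finite disjoint covering family; (M) all morphisms are monomorphisms. Maps $A\to C$, $B\to C$ are disjoint if $A\times_CB$ exists and is initial. An assembler is closed if it has all pullbacks. A subassembler is a subcategory which is an assembler and whose inclusion is continuous and preserves the initial object and disjointness. A sieve is a full subcategory $\mathcal{D}$ such that whenever $A\to B$ is a morphism with $B\in\mathcal{D}$ then $A\in\mathcal{D}$. $\mathcal{C}$ has complements for $A$ if every morphism $A\to B$ belongs to a finite disjoint covering family of $B$. $\mathcal{W}(\mathcal{C})$ is the category whose objects are finite families $\{A_i\}_{i\in I}$ of noninitial objects, and whose morphisms $\{Z_k\}_{k\in K}\to\{A_i\}_{i\in I}$ are a map $g:K\to I$ with morphisms $g_k:Z_k\to A_{g(k)}$ such that for each $i$, $\{g_k\}_{k\in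 g^{-1}(i)}$ is a finite disjoint covering family of $A_i$. *)

(* Defs.v *)
From mathcomp Require Import all_boot.
Set Implicit Arguments. Unset Strict Implicit. Unset Printing Implicit Defensive.

Record Cat := {
  Obj :> Type;
  Hom : Obj -> Obj -> Type;
  idm : forall A, Hom A A;
  compm : forall A B C, Hom B C -> Hom A B -> Hom A C;
  comp_idl : forall A B (f : Hom A B), compm (idm B) f = f;
  comp_idr : forall A B (f : Hom A B), compm f (idm A) = f;
  comp_assoc : forall A B C D (h : Hom C D) (g : Hom B C) (f : Hom A B),
      compm h (compm g f) = compm (compm h g) f
}.
Arguments Hom {c}.
Arguments idm {c}.
Arguments compm {c A B C}.

Section CatDefs.
Variable C : Cat.

Definition initial (X : C) : Prop :=
  forall Y : C, exists h : Hom X Y, forall h' : Hom X Y, h' = h.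

Definition mono (A B : C) (f : Hom A B) : Prop :=
  forall X (u v : Hom X A), compm f u = compm f v -> u = v.

Definition is_pullback (A B D : C) (f : Hom A D) (g : Hom B D)
    (P : C) (p1 : Hom P A) (p2 : Hom P B) : Prop :=
  compm f p1 = compm g p2 /\
  forall X (q1 : Hom X A) (q2 : Hom X B), compm f q1 = compm g q2 ->
    exists u : Hom X P, (compm p1 u = q1 /\ compm p2 u = q2) /\
      forall u' : Hom X P, compm p1 u' = q1 -> compm p2 u' = q2 -> u' = u.

Definition closed_cat : Prop :=
  forall (A B D : C) (f : Hom A D) (g : Hom B D),
    exists P (p1 : Hom P A) (p2 : Hom P B), is_pullback f g p1 p2.

Definition disjoint_maps (A B D : C) (f : Hom A D) (g : Hom B D) : Prop :=
  exists P (p1 : Hom P A) (p2 : Hom P B), is_pullback f g p1 p2 /\ initial P.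

Record sieve (B : C) := {
  sv : forall X : C, Hom X B -> Prop;
  sv_closed : forall (X Y : C) (f : Hom X B) (h : Hom Y X), sv f -> sv (compm f h)
}.

Definition maxsieve (B : C) : sieve B.
Proof. exists (fun X (_ : Hom X B) => True). by []. Defined.

Definition pb_sieve (A B : C) (f : Hom A B) (S : sieve B) : sieve A.
Proof.
  exists (fun X (h : Hom X A) => sv S (compm f h)).
  move=> X Y g h H. rewrite comp_assoc. exact: sv_closed.
Defined.

Definition gen_sieve (I : Type) (A : I -> C) (B : C) (f : forall i, Hom (A i) B)
  : sieve B.
Proof.
  exists (fun X (h : Hom X B) => exists i (u : Hom X (A i)), h = compm (f i) u).
  move=> X Y g h [i [u ->]]. exists i, (compm u h). by rewrite comp_assoc.
Defined.

Record topology := {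
  covers : forall B : C, sieve B -> Prop;
  top_max : forall B, covers (maxsieve B);
  top_stab : forall (A B : C) (f : Hom A B) (S : sieve B),
      covers S -> covers (pb_sieve f S);
  top_trans : forall (B : C) (S R : sieve B), covers S ->
      (forall X (f : Hom X B), sv S f -> covers (pb_sieve f R)) -> covers R
}.

Variable J : topology.

Definition covering_family (I : Type) (A : I -> C) (B : C)
    (f : forall i, Hom (A i) B) : Prop :=
  covers J (gen_sieve f).

Definition fdc_family (I : finType) (A : I -> C) (B : C)
    (f : forall i, Hom (A i) B) : Prop :=
  covering_family f /\ forall i j, i <> j -> disjoint_maps (f i) (f j).

Definition refines (K I : Type) (Z : K -> C) (A : I -> C) (B : C)
    (g : forall k, Hom (Z k) B) (f : forall i, Hom (A i) B) : Prop :=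
  forall k, exists i (u : Hom (Z k) (A i)), g k = compm (f i) u.

Definition has_complements_for (A : C) : Prop :=
  forall (B : C) (f : Hom A B),
    exists (I : finType) (Ai : I -> C) (h : forall i, Hom (Ai i) B) (i0 : I),
      fdc_family h /\
      existT (fun X : C => Hom X B) (Ai i0) (h i0) = existT (fun X : C => Hom X B) A f.

End CatDefs.

Arguments covering_family {C} J {I A B} f.
Arguments fdc_family {C} J {I A B} f.

Record assembler (C : Cat) := {
  atop : topology C;
  asm_I : exists E : C, initial E /\
      covering_family atop (fun v : void => match v return Hom (match v with end) E with end);
  asm_R : forall (B : C) (I1 I2 : finType) (A1 : I1 -> C) (A2 : I2 -> C)
      (f1 : forall i, Hom (A1 i) B) (f2 : forall i, Hom (A2 i) B),
      fdc_family atop f1 -> fdc_family atop f2 ->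
      exists (K : finType) (Z : K -> C) (g : forall k, Hom (Z k) B),
        fdc_family atop g /\ refines g f1 /\ refines g f2;
  asm_M : forall (A B : C) (f : Hom A B), mono f
}.

Section FullSub.
Variable C : Cat.
Variable inD : C -> Prop.

Definition fs_obj := {A : C | inD A}.
Definition fs_hom (A B : fs_obj) := Hom (proj1_sig A) (proj1_sig B).

Definition fullsub : Cat :=
  @Build_Cat fs_obj fs_hom (fun A => idm (proj1_sig A))
    (fun A B D g f => compm g f)
    (fun A B f => comp_idl f) (fun A B f => comp_idr f)
    (fun A B D E h g f => comp_assoc h g f).

Definition is_sieve : Prop :=
  forall (A B : C) (f : Hom A B), inD B -> inD A.

End FullSub.

Definition subassembler (C : Cat) (AC : assembler C) (inD : C -> Prop)
    (AD : assembler (fullsub inD)) : Prop :=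
  (forall (I : Type) (A : I -> fullsub inD) (B : fullsub inD)
     (f : forall i, @Hom (fullsub inD) (A i) B),
     covering_family (atop AD) f ->
     covering_family (atop AC) (A := fun i => proj1_sig (A i)) (B := proj1_sig B) f) /\
  (forall E : fullsub inD, initial E -> initial (proj1_sig E)) /\
  (forall (A B D : fullsub inD) (f : @Hom (fullsub inD) A D) (g : @Hom (fullsub inD) B D),
     disjoint_maps f g -> @disjoint_maps C _ _ _ f g).

Definition fiber_mor (C : Cat) (K I : finType) (Z : K -> C) (A : I -> C)
    (g : K -> I) (gk : forall k, Hom (Z k) (A (g k))) (i : I)
    (x : {k : K | g k == i}) : Hom (Z (val x)) (A i) :=
  match eqP (valP x) in _ = j return Hom (Z (val x)) (A j) with
  | erefl => gk (val x)
  end.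

(** (g, (g_k)) : {Z_k}_K -> {A_i}_I is a morphism of W(C) (the source
    being an object of W(C): all Z_k noninitial) *)
Definition W_morphism (C : Cat) (J : topology C) (K I : finType)
    (Z : K -> C) (A : I -> C) (g : K -> I) (gk : forall k, Hom (Z k) (A (g k))) : Prop :=
  (forall k, ~ initial (Z k)) /\
  forall i : I, fdc_family J (A := fun x : {k : K | g k == i} => Z (val x))
                  (fiber_mor gk (i := i)).

(* Main.v *)
Require Import Defs.
From mathcomp Require Import all_boot.
From Stdlib Require Import ClassicalEpsilon ClassicalDescription ProofIrrelevance FunctionalExtensionality PropExtensionality.
From Stdlib Require List Eqdep_dec.
Set Implicit Arguments. Unset Strict Implicit. Unset Printing Implicit Defensive.

Section Basic.
Variable C : Cat.
Variable AC : assembler C.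
Local Notation J := (atop AC).

Lemma sieve_ext (B : C) (S R : sieve B) :
  (forall X (h : Hom X B), sv S h <-> sv R h) -> S = R.
Proof.
case: S => s sc; case: R => r rc /= H.
have E : s = r.
  apply: functional_extensionality_dep => X; apply: functional_extensionality => h.
  by apply: propositional_extensionality.
subst r; f_equal; exact: proof_irrelevance.
Qed.

Lemma cov_mono (B : C) (S R : sieve B) : covers J S ->
  (forall X (h : Hom X B), sv S h -> sv R h) -> covers J R.
Proof.
move=> HS HSR; apply: (top_trans HS) => X f Hf.
have -> : pb_sieve f R = maxsieve X.
  apply: sieve_ext => Y h /=; split=> // _.
  apply: HSR; exact: sv_closed.
exact: top_max.
Qed.

Lemma monoC (A B : C) (f : Hom A B) : mono f.
Proof. exact: asm_M. Qed.

Lemma initial_map (X E : C) (m : Hom X E) : initial E -> initial X.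
Proof.
move=> HE.
have [u _] := HE X.
have mu : compm m u = idm E.
  have [h Hh] := HE E. by rewrite (Hh (compm m u)) (Hh (idm E)).
have um : compm u m = idm X.
  apply: (@monoC _ _ m). by rewrite comp_assoc mu comp_idl comp_idr.
move=> Y. have [hE HhE] := HE Y.
exists (compm hE m) => h'.
by rewrite -(HhE (compm h' u)) -comp_assoc um comp_idr.
Qed.

Lemma initial_covers (X : C) (R : sieve X) : initial X -> covers J R.
Proof.
move=> HX. have [E0 [HE0 Hcov]] := asm_I AC.
have [h _] := HX E0.
apply: (cov_mono (top_stab h Hcov)) => Y y /= [[]].
Qed.

Lemma covers_of_initial_map (X E : C) (m : Hom X E) (R : sieve X) : initial E -> covers J R.
Proof. move=> HE; apply: initial_covers; exact: initial_map HE. Qed.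

Definition DJ (A B D : C) (f : Hom A D) (g : Hom B D) : Prop :=
  forall X (q1 : Hom X A) (q2 : Hom X B), compm f q1 = compm g q2 -> initial X.

Lemma disj_DJ (A B D : C) (f : Hom A D) (g : Hom B D) : disjoint_maps f g -> DJ f g.
Proof.
move=> [P [p1 [p2 [[_ Hu] HP]]]] X q1 q2 E.
have [u _] := Hu X q1 q2 E. exact: initial_map HP.
Qed.

Hypothesis cl : closed_cat C.

Lemma DJ_disj (A B D : C) (f : Hom A D) (g : Hom B D) : DJ f g -> disjoint_maps f g.
Proof.
move=> H. have [P [p1 [p2 Hp]]] := cl f g.
exists P, p1, p2; split=> //. apply: (H P p1 p2). by case: Hp.
Qed.

Lemma DJ_sym (A B D : C) (f : Hom A D) (g : Hom B D) : DJ f g -> DJ g f.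
Proof. move=> H X q1 q2 E. exact: (H X q2 q1 (esym E)). Qed.

Lemma DJ_sub (A B D A' B' : C) (f : Hom A D) (g : Hom B D) (a : Hom A' A) (b : Hom B' B) :
  DJ f g -> DJ (compm f a) (compm g b).
Proof. move=> H X q1 q2 E. apply: (H X (compm a q1) (compm b q2)). by rewrite !comp_assoc. Qed.

Lemma DJ_subl (A B D A' : C) (f : Hom A D) (g : Hom B D) (a : Hom A' A) :
  DJ f g -> DJ (compm f a) g.
Proof. move=> H; rewrite -(comp_idr g); exact: DJ_sub. Qed.

Lemma DJ_post (A B D E : C) (f : Hom A D) (g : Hom B D) (m : Hom D E) :
  DJ f g -> DJ (compm m f) (compm m g).
Proof. move=> H X q1 q2 Eq. apply: (H X q1 q2). apply: (@monoC _ _ m). by rewrite !comp_assoc. Qed.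

Lemma DJ_postK (A B D E : C) (f : Hom A D) (g : Hom B D) (m : Hom D E) :
  DJ (compm m f) (compm m g) -> DJ f g.
Proof. move=> H X q1 q2 Eq. apply: (H X q1 q2). by rewrite -!comp_assoc Eq. Qed.

Lemma DJ_self (A D : C) (f : Hom A D) : DJ f f -> initial A.
Proof. move=> H. exact: (H A (idm A) (idm A)). Qed.

Definition DJs (Y : C) (s t : {X : C & Hom X Y}) := DJ (projT2 s) (projT2 t).

Lemma fact_tr (Y W : C) (s t : {X : C & Hom X Y}) (hh : Hom W Y) : s = t ->
  (exists u : Hom W (projT1 s), hh = compm (projT2 s) u) ->
  exists u : Hom W (projT1 t), hh = compm (projT2 t) u.
Proof. by move=> ->. Qed.

Definition pb (P : Prop) : bool := if excluded_middle_informative P then true else false.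
Lemma pbP (P : Prop) : pb P <-> P.
Proof. rewrite /pb; case: excluded_middle_informative => //. Qed.

End Basic.


Lemma DJ_tr (C : Cat) (Y W : C) (s t : {X : C & Hom X Y}) (f : Hom W Y) :
  s = t -> DJ f (projT2 s) -> DJ f (projT2 t).
Proof. by move=> ->. Qed.

Section Ext.
Variable C : Cat.
Variable AC : assembler C.
Local Notation J := (atop AC).
Hypothesis cl : closed_cat C.
Variable inD : C -> Prop.
Hypothesis Hcomp : forall X : C, inD X -> has_complements_for J X.

Lemma ext (Y : C) (l : seq {X : C & Hom X Y}) :
  (forall a, List.In a l -> inD (projT1 a)) ->
  (forall a b, List.In a l -> List.In b l -> a = b \/ DJs a b) ->
  exists (K : finType) (Z : K -> C) (h : forall k, Hom (Z k) Y),
    fdc_family J h /\ forall k, List.In (existT _ (Z k) (h k)) l \/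
      forall a, List.In a l -> DJ (h k) (projT2 a).
Proof.
elim: l => [|[Xa ha] l IH] HD Hpw.
  exists (unit : finType), (fun _ => Y), (fun _ => idm Y); split; last by move=> k; right.
  split.
    apply: (cov_mono (top_max J Y)) => X h _ /=. exists tt, h. by rewrite comp_idl.
  by case=> [] [].
have [K [Z [h [[Hcov Hdis] Hpr]]]] : exists (K : finType) (Z : K -> C) (h : forall k, Hom (Z k) Y),
    fdc_family J h /\ forall k, List.In (existT _ (Z k) (h k)) l \/
      forall a, List.In a l -> DJ (h k) (projT2 a).
  apply: IH => [a Ha|a b Ha Hb]; [apply: HD | apply: Hpw]; by right.
case: (classic (List.In (existT _ Xa ha) l)) => Hin.
  exists K, Z, h; split; first by split.
  move=> k; case: (Hpr k) => [H|H]; [left; by right | right].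
  move=> a [<-|Ha]; last exact: H. exact: H.
have Hda : forall b, List.In b l -> DJ ha (projT2 b).
  move=> b Hb. case: (Hpw (existT _ Xa ha) b (or_introl erefl) (or_intror Hb)) => //.
  by move=> E; rewrite E in Hin.
have [I2 [A2 [h2 [i0 [[Hcov2 Hdis2] E2]]]]] := Hcomp (HD _ (or_introl erefl)) ha.
have [K3 [Z3 [h3 [[Hcov3 Hdis3] [R1 R2]]]]] :=
  asm_R (conj Hcov Hdis) (conj Hcov2 Hdis2).
pose P1 := fun k : K => pb (List.In (existT _ (Z k) (h k)) l).
pose P3 := fun z : K3 => pb (forall b, List.In b (existT _ Xa ha :: l) -> DJ (h3 z) (projT2 b)).
pose K' := ({k : K | P1 k} + unit + {z : K3 | P3 z})%type.
pose Z' := fun k : K' => match k with inl (inl x) => Z (val x) | inl (inr _) => Xa | inr z => Z3 (val z) end.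
pose h' := fun k : K' => match k return Hom (Z' k) Y with
   inl (inl x) => h (val x) | inl (inr _) => ha | inr z => h3 (val z) end.
exists (K' : finType), Z', h'.
have Hdj : forall i j : K, i <> j -> DJ (h i) (h j) by move=> i j H; exact: (disj_DJ AC (Hdis i j H)).
have Hdj2 : forall i j : I2, i <> j -> DJ (h2 i) (h2 j) by move=> i j H; exact: (disj_DJ AC (Hdis2 i j H)).
have Hdj3 : forall i j : K3, i <> j -> DJ (h3 i) (h3 j) by move=> i j H; exact: (disj_DJ AC (Hdis3 i j H)).
split; first split.
- apply: (cov_mono Hcov3) => X hh [z [w ->]].
  have [k [u1 E1]] := R1 z. have [r [u2 E2']] := R2 z.
  case: (boolP (P1 k)) => Hk.
    exists (inl (inl (exist _ k Hk))), (compm u1 w) => /=. by rewrite E1 comp_assoc.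
  have Hk' : forall b, List.In b l -> DJ (h k) (projT2 b).
    case: (Hpr k) => // H; exfalso; move: Hk => /negP; apply; exact/pbP.
  case: (eqVneq r i0) => Hr.
    subst r.
    have [u' Eu] : exists u' : Hom X Xa, compm (h3 z) w = compm ha u'.
      apply: (fact_tr E2). exists (compm u2 w). by rewrite E2' comp_assoc.
    by exists (inl (inr tt)), u'.
  have Hz : P3 z.
    apply/pbP => b [<-|Hb] /=.
      rewrite E2'; apply: DJ_subl.
      exact: (DJ_tr E2 (Hdj2 r i0 (elimN eqP Hr))).
    rewrite E1; apply: DJ_subl; exact: Hk'.
  by exists (inr (exist _ z Hz)), w.
- move=> i j Hij; apply: (DJ_disj cl).
  move: i j Hij => [[x|[]]|z] [[y|[]]|z'] Hij /=.
  + apply: Hdj => E; apply: Hij; do 2 f_equal; exact: val_inj.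
  + apply: DJ_sym. apply: (Hda (existT (fun X : C => Hom X Y) _ (h (val x)))). exact: ((pbP _).1 (valP x)).
  + apply: DJ_sym. have Hx : List.In (existT _ (Z (val x)) (h (val x))) l by exact: ((pbP _).1 (valP x)).
    exact: ((pbP _).1 (valP z') _ (or_intror Hx)).
  + apply: (Hda (existT (fun X : C => Hom X Y) _ (h (val y)))). exact: ((pbP _).1 (valP y)).
  + by [].
  + apply: DJ_sym. exact: ((pbP _).1 (valP z') (existT _ Xa ha) (or_introl erefl)).
  + have Hx : List.In (existT _ (Z (val y)) (h (val y))) l by exact: ((pbP _).1 (valP y)).
    exact: ((pbP _).1 (valP z) _ (or_intror Hx)).
  + exact: ((pbP _).1 (valP z) (existT _ Xa ha) (or_introl erefl)).
  + apply: Hdj3 => E; apply: Hij; f_equal; exact: val_inj.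
- move=> [[x|[]]|z] /=.
  + left; right; exact: ((pbP _).1 (valP x)).
  + by left; left.
  + right => a Ha; exact: ((pbP _).1 (valP z) a Ha).
Qed.

End Ext.


Lemma pair_inj (I : eqType) (P : I -> Type) i (a b : P i) :
  existT P i a = existT P i b -> a = b.
Proof.
apply: Eqdep_dec.inj_pair2_eq_dec => x y.
case: (eqVneq x y) => [->|/eqP H]; [by left | by right].
Qed.

Lemma inP (T : eqType) (x : T) (s : seq T) : x \in s -> List.In x s.
Proof.
elim: s => //= a s IH; rewrite in_cons => /orP [/eqP ->|/IH]; [by left | by right].
Qed.

Section Fib.
Variables (C : Cat) (K I : finType) (Z : K -> C) (A : I -> C) (g : K -> I)
  (gk : forall k, Hom (Z k) (A (g k))).

Lemma fm_sig0 k i (E : g k = i) :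
  existT (fun j => Hom (Z k) (A j)) i
    (match E in _ = j return Hom (Z k) (A j) with erefl => gk k end) =
  existT _ (g k) (gk k).
Proof. by case: _ / E. Qed.

Lemma fm_sig i (x : {k : K | g k == i}) :
  existT (fun j => Hom (Z (val x)) (A j)) i (fiber_mor gk x) = existT _ (g (val x)) (gk (val x)).
Proof. exact: (fm_sig0 (eqP (valP x))). Qed.

Lemma fm_refl k (e : g k == g k) : fiber_mor gk (i := g k) (exist _ k e) = gk k.
Proof. apply: (@pair_inj I (fun j => Hom (Z k) (A j)) (g k)). exact: (fm_sig (exist _ k e)). Qed.

End Fib.


Record Fam (C : Cat) (Y : C) := MkFam { fK : finType; fZ : fK -> C; fh : forall x, Hom (fZ x) Y }.

Section Main.
Variable C : Cat.
Variable AC : assembler C.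
Local Notation J := (atop AC).
Hypothesis cl : closed_cat C.
Variable inD : C -> Prop.
Hypothesis Hsv : is_sieve inD.
Hypothesis Hcomp : forall X : C, inD X -> has_complements_for J X.
Variables (I : finType) (A : I -> C) (B : C) (f : forall i, Hom (A i) B).
Hypothesis Hpb : forall i i', i <> i' -> exists (P : C) (p1 : Hom P (A i)) (p2 : Hom P (A i')),
  is_pullback (f i) (f i') p1 p2 /\ inD P.

Definition Fsv (K : finType) (Z : K -> C) (g : K -> I) (gk : forall k, Hom (Z k) (A (g k))) (i : I) : sieve (A i).
Proof.
exists (fun X (h : Hom X (A i)) => exists k (u : Hom X (Z k)),
  existT (fun j => Hom X (A j)) (g k) (compm (gk k) u) = existT _ i h).
move=> X Y h h' [k [u E]]. exists k, (compm u h').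
have := f_equal (fun s : {j : I & Hom X (A j)} =>
   existT (fun j => Hom Y (A j)) (projT1 s) (compm (projT2 s) h')) E.
by rewrite /= comp_assoc.
Defined.

Definition Inv (s : seq I) : Prop :=
  exists (K : finType) (Z : K -> C) (g : K -> I) (gk : forall k, Hom (Z k) (A (g k))),
   (forall k, g k \in s) /\ (forall i, i \in s -> covers J (Fsv gk i)) /\
   (forall k k', k <> k' ->
      (existT (fun X : C => Hom X B) (Z k) (compm (f (g k)) (gk k)) =
       existT (fun X : C => Hom X B) (Z k') (compm (f (g k')) (gk k')) /\ g k <> g k')
      \/ DJ (compm (f (g k)) (gk k)) (compm (f (g k')) (gk k'))).

Lemma Inv0 : Inv [::].
Proof.
exists (void : finType), (fun v : void => match v with end), (fun v : void => match v with end),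
  (fun v : void => match v return Hom _ (A _) with end).
split; [by move=> [] | split; [by move=> i; rewrite in_nil | by move=> []]].
Qed.

Lemma Inv_dup i0 s : i0 \in s -> Inv s -> Inv (i0 :: s).
Proof.
move=> Hi [K [Z [g [gk [H1 [H2 H3]]]]]].
exists K, Z, g, gk; split; [|split] => //.
  by move=> k; rewrite in_cons H1 orbT.
move=> i; rewrite in_cons => /orP [/eqP ->|]; exact: H2.
Qed.

Definition PBd (i0 : I) (sg0 : {X : C & Hom X B}) :
  {P : C & {p1 : Hom P (projT1 sg0) & {p2 : Hom P (A i0) | is_pullback (projT2 sg0) (f i0) p1 p2}}}.
Proof.
have H := cl (projT2 sg0) (f i0).
have [P HP] := constructive_indefinite_description _ H.
have [p1 Hp1] := constructive_indefinite_description _ HP.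
have [p2 Hp2] := constructive_indefinite_description _ Hp1.
exact: (existT _ P (existT _ p1 (exist _ p2 Hp2))).
Defined.
Definition Qo (i0 : I) (sg0 : {X : C & Hom X B}) := projT1 (PBd i0 sg0).
Definition q1 (i0 : I) (sg0 : {X : C & Hom X B}) : Hom (Qo i0 sg0) (projT1 sg0) := projT1 (projT2 (PBd i0 sg0)).
Definition q2 (i0 : I) (sg0 : {X : C & Hom X B}) : Hom (Qo i0 sg0) (A i0) := proj1_sig (projT2 (projT2 (PBd i0 sg0))).
Lemma q_pb (i0 : I) (sg0 : {X : C & Hom X B}) : is_pullback (projT2 sg0) (f i0) (q1 i0 sg0) (q2 i0 sg0).
Proof. exact: (proj2_sig (projT2 (projT2 (PBd i0 sg0)))). Qed.

Definition Spec (i0 : I) (sg0 : {X : C & Hom X B}) (F : Fam (projT1 sg0)) : Prop :=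
  inD (Qo i0 sg0) -> fdc_family J (fh (f:=F)) /\
    exists x0 : fK F, existT (fun X => Hom X (projT1 sg0)) (fZ x0) (fh x0) = existT _ (Qo i0 sg0) (q1 i0 sg0)
      /\ forall x : fK F, x <> x0 -> DJ (fh x) (q1 i0 sg0).

Arguments Spec : clear implicits.
Lemma exF (i0 : I) (sg0 : {X : C & Hom X B}) : exists F, Spec i0 sg0 F.
Proof.
case: (classic (inD (Qo i0 sg0))) => HD; last first.
  by exists (@MkFam _ _ (unit : finType) (fun _ => projT1 sg0) (fun _ => idm _)).
have [I2 [A2 [h2 [j0 [Hf E]]]]] := Hcomp HD (q1 i0 sg0).
exists (@MkFam _ _ I2 A2 h2) => _ /=; split=> //. exists j0; split=> // x Hx.
apply: (DJ_tr E). exact: (disj_DJ AC (Hf.2 x j0 Hx)).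
Qed.
Definition Fo (i0 : I) (sg0 : {X : C & Hom X B}) := proj1_sig (constructive_indefinite_description _ (exF i0 sg0)).
Lemma Fo_spec (i0 : I) (sg0 : {X : C & Hom X B}) : Spec i0 sg0 (Fo i0 sg0).
Proof. exact: (proj2_sig (constructive_indefinite_description _ (exF i0 sg0))). Qed.


Lemma HQ (i0 : I) (sg0 : {X : C & Hom X B}) (x : fK (Fo i0 sg0))
  (t : {X : C & Hom X (A i0)}) : inD (Qo i0 sg0) ->
  existT (fun X => Hom X (A i0)) (Qo i0 sg0) (q2 i0 sg0) = t ->
  existT (fun X => Hom X B) (fZ x) (compm (projT2 sg0) (fh x)) =
    existT (fun X => Hom X B) (projT1 t) (compm (f i0) (projT2 t))
  \/ DJ (compm (projT2 sg0) (fh x)) (compm (f i0) (projT2 t)).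
Proof.
move=> HDs Et; subst t => /=.
have [Fd [x0 [E0 Hx0]]] := @Fo_spec i0 sg0 HDs.
have Pe := (q_pb i0 sg0).1.
case: (eqVneq x x0) => [->|Hx].
  left. have := f_equal (fun s : {X : C & Hom X (projT1 sg0)} =>
     existT (fun X => Hom X B) (projT1 s) (compm (projT2 sg0) (projT2 s))) E0.
  by rewrite /= Pe.
right. rewrite -Pe. apply: (DJ_post AC). apply: Hx0. exact/eqP.
Qed.

Lemma HFF (i0 : I) (s1 s2 : {X : C & Hom X B}) (E : s1 = s2)
  (x : fK (Fo i0 s1)) (x' : fK (Fo i0 s2)) : inD (Qo i0 s1) ->
  existT (fun X => Hom X B) (fZ x) (compm (projT2 s1) (fh x)) =
    existT (fun X => Hom X B) (fZ x') (compm (projT2 s2) (fh x'))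
  \/ DJ (compm (projT2 s1) (fh x)) (compm (projT2 s2) (fh x')).
Proof.
move=> HDs; subst s2.
have [[_ Fd] _] := @Fo_spec i0 s1 HDs.
case: (eqVneq x x') => [->|Hx]; [by left | right].
apply: (DJ_post AC). apply: (disj_DJ AC). apply: Fd. exact/eqP.
Qed.

Lemma Inv_step i0 s : i0 \notin s -> Inv s -> Inv (i0 :: s).
Proof.
move=> Hi0 [K [Z [g [gk [Hmem [Hcov Hpw]]]]]].
pose sgk := fun k => existT (fun X : C => Hom X B) (Z k) (compm (f (g k)) (gk k)).
have Hgk : forall k, g k <> i0 by move=> k E; move: (Hmem k); rewrite E (negbTE Hi0).
have HD : forall k, inD (Qo i0 (sgk k)).
  move=> k. have [P [r1 [r2 [[Pc Pu] HP]]]] := Hpb (Hgk k).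
  have [Pe _] := q_pb i0 (sgk k).
  have [u _] := Pu _ (compm (gk k) (q1 i0 (sgk k))) (q2 i0 (sgk k))
    ltac:(by rewrite comp_assoc; exact: Pe).
  exact: (Hsv u HP).
pose qk := fun k => existT (fun X : C => Hom X (A i0)) (Qo i0 (sgk k)) (q2 i0 (sgk k)).
pose l := map qk (enum K).
have Hl : forall a, List.In a l -> exists k, a = qk k.
  move=> a /List.in_map_iff [k [<- _]]; by exists k.
have Hlk : forall k, List.In (qk k) l.
  move=> k; apply: List.in_map; apply: inP; by rewrite mem_enum.
have Hpwl : forall a b, List.In a l -> List.In b l -> a = b \/ DJs a b.
  move=> a b /Hl [k ->] /Hl [k' ->].
  case: (eqVneq k k') => [->|Hkk]; first by left.
  case: (Hpw k k' (elimN eqP Hkk)) => [[E _]|Hdj].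
    left; have E' : sgk k = sgk k' := E; by rewrite /qk E'.
  right; move=> X a1 a2 Eq.
  apply: (Hdj X (compm (q1 i0 (sgk k)) a1) (compm (q1 i0 (sgk k')) a2)).
  have Pe := (q_pb i0 (sgk k)).1; have Pe' := (q_pb i0 (sgk k')).1.
  rewrite /= in Pe Pe'.
  rewrite !comp_assoc Pe Pe' -!comp_assoc.
  by move: Eq => /= ->.
have [GK [GZ [Gh [[Gcov Gdis] Gpr]]]] := @ext C AC cl inD Hcomp (A i0) l
  ltac:(by move=> a /Hl [k ->]; exact: HD) Hpwl.
pose FK := fun k => fK (Fo i0 (sgk k)).
pose K' := ({k : K & FK k} + GK)%type.
pose Z' := fun kk : K' => match kk with inl p => fZ (projT2 p) | inr y => GZ y end.
pose g' := fun kk : K' => match kk with inl p => g (projT1 p) | inr _ => i0 end.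
pose gk' := fun kk : K' => match kk return Hom (Z' kk) (A (g' kk)) with
  inl p => compm (gk (projT1 p)) (fh (projT2 p)) | inr y => Gh y end.
exists (K' : finType), Z', g', gk'.
split; [|split].
- case=> [[k x]|y] /=; rewrite in_cons ?eqxx ?Hmem ?orbT //.
- move=> i; rewrite in_cons; case: (eqVneq i i0) => [->|Hne] /= Hi.
    apply: (cov_mono Gcov) => X h [y [w ->]]. by exists (inr y), w.
  apply: (top_trans (Hcov i Hi)) => X h [k [u E]].
  have Ei := f_equal (@projT1 _ _) E. simpl in Ei. subst i.
  have Eh := pair_inj E. subst h.
  have [[Fcov _] _] := @Fo_spec i0 (sgk k) (HD k).
  apply: (cov_mono (top_stab u Fcov)) => Y y [x [z Ez]] /=.
  exists (inl (existT _ k x)), z => /=.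
  by rewrite -!comp_assoc Ez.
- have HLR : forall k (x : FK k) y,
    (existT (fun X => Hom X B) (fZ x) (compm (compm (f (g k)) (gk k)) (fh x)) =
     existT (fun X => Hom X B) (GZ y) (compm (f i0) (Gh y)) /\ g k <> i0)
    \/ DJ (compm (compm (f (g k)) (gk k)) (fh x)) (compm (f i0) (Gh y)).
    move=> k x y.
    case: (Gpr y) => [Hin|Hdy].
      have [k'' Ek''] := Hl _ Hin.
      case: (classic (sgk k = sgk k'')) => Es.
        have Et : existT (fun X => Hom X (A i0)) (Qo i0 (sgk k)) (q2 i0 (sgk k)) =
          existT _ (GZ y) (Gh y) by rewrite Es Ek''.
        move: (HQ x (HD k) Et) => /= [E2|D2]; [left; split => //; exact: Hgk | by right].
      have Hkk : k <> k'' by move=> Ek; apply: Es; rewrite Ek.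
      case: (Hpw k k'' Hkk) => [[E _]|Hdj]; first by exfalso; apply: Es; exact: E.
      right.
      have Hd1 : DJ (compm (compm (f (g k)) (gk k)) (fh x)) (compm (f i0) (q2 i0 (sgk k''))).
        have Pe := (q_pb i0 (sgk k'')).1. rewrite /= in Pe. rewrite -Pe. exact: DJ_sub.
      pose phi := fun t : {X : C & Hom X (A i0)} =>
        existT (fun X => Hom X B) (projT1 t) (compm (f i0) (projT2 t)).
      exact: (DJ_tr (f_equal phi (esym Ek'')) Hd1).
    right. move=> X a1 a2 Eq.
    have [Pe Pu] := q_pb i0 (sgk k).
    have Hc : compm (compm (f (g k)) (gk k)) (compm (fh x) a1) = compm (f i0) (compm (Gh y) a2)
      by rewrite !comp_assoc.
    have [u [[Eu1 Eu2] _]] := Pu X (compm (fh x) a1) (compm (Gh y) a2) Hc.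
    exact: (Hdy (qk k) (Hlk k) X a2 u (esym Eu2)).
  move=> [[k x]|y] [[k' x']|y'] Hne /=.
  + case: (eqVneq k k') => [Ekk|Hkk].
      subst k'. right. have Hx : x <> x' by move=> Ex; apply: Hne; rewrite Ex.
      rewrite !comp_assoc. apply: (DJ_post AC).
      have [[_ Fd] _] := @Fo_spec i0 (sgk k) (HD k). exact: (disj_DJ AC (Fd x x' Hx)).
    case: (Hpw k k' (elimN eqP Hkk)) => [[E Eg]|Hdj]; last first.
      right. rewrite !comp_assoc. exact: DJ_sub.
    have := HFF E x x' (HD k). rewrite /= !comp_assoc.
    by case=> [E2|D2]; [left | right].
  + rewrite comp_assoc; exact: HLR.
  + rewrite comp_assoc; case: (HLR k' x' y) => [[E Eg]|D].
      left; split; [exact: esym E | by move=> E'; apply: Eg; rewrite E'].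
    right; exact: DJ_sym.
  + right. apply: (DJ_post AC). apply: (disj_DJ AC). apply: Gdis => Ey; apply: Hne; by rewrite Ey.
Qed.

Lemma Inv_all (s : seq I) : Inv s.
Proof.
elim: s => [|i0 s IH]; first exact: Inv0.
case: (boolP (i0 \in s)) => H; [exact: Inv_dup | exact: Inv_step].
Qed.

End Main.





Theorem lemma5p12 (C : Cat) (AC : assembler C) (inD : C -> Prop)
    (AD : assembler (fullsub inD)) :
  closed_cat C ->
  is_sieve inD ->
  subassembler AC AD ->
  (forall X : C, inD X -> has_complements_for (atop AC) X) ->
  forall (I : finType) (A : I -> C) (B : C) (f : forall i, Hom (A i) B),
    (forall i i', i <> i' ->
       exists (P : C) (p1 : Hom P (A i)) (p2 : Hom P (A i')),
         is_pullback (f i) (f i') p1 p2 /\ inD P) ->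
    exists (K : finType) (Z : K -> C) (g : K -> I) (gk : forall k, Hom (Z k) (A (g k))),
      W_morphism (atop AC) gk /\
      forall k k' : K, k <> k' ->
        (existT (fun X : C => Hom X B) (Z k) (compm (f (g k)) (gk k)) =
           existT (fun X : C => Hom X B) (Z k') (compm (f (g k')) (gk k'))
         \/ disjoint_maps (compm (f (g k)) (gk k)) (compm (f (g k')) (gk k'))) /\
        (existT (fun X : C => Hom X B) (Z k) (compm (f (g k)) (gk k)) =
           existT (fun X : C => Hom X B) (Z k') (compm (f (g k')) (gk k')) ->
         g k <> g k').
Proof.
move=> cl Hsv _ Hcomp I A B f Hpb.
have := Inv_all cl Hsv Hcomp Hpb (enum I); rewrite /Inv => -[K [Z [g [gk [_ [Hcov Hpw]]]]]].
pose P := fun k => pb (~ initial (Z k)).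
pose K2 := {k : K | P k}.
pose Z2 := fun k : K2 => Z (val k).
pose g2 := fun k : K2 => g (val k).
pose gk2 := fun k : K2 => gk (val k) : Hom (Z2 k) (A (g2 k)).
have Hne : forall x y : K2, x <> y -> val x <> val y.
  move=> x y H E; apply: H; exact: val_inj.
exists (K2 : finType), Z2, g2, gk2.
split; first split.
- move=> k; exact: ((pbP _).1 (valP k)).
- move=> i; split.
    apply: (top_trans (Hcov i ltac:(by rewrite mem_enum))) => X h [k [u E]].
    have Ei := f_equal (@projT1 _ _) E. simpl in Ei. subst i.
    have Eh := pair_inj E. subst h.
    case: (classic (initial (Z k))) => Hk.
      apply: initial_covers. exact: (initial_map AC u Hk).
    have Pk : P k by exact: ((pbP _).2 Hk).
    apply: (cov_mono (top_max _ X)) => Y y _ /=.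
    exists (exist _ (exist _ k Pk) (eqxx (g k))), (compm u y).
    rewrite (@fm_refl C K2 I Z2 A g2 gk2 (exist _ k Pk) (eqxx _)).
    by rewrite comp_assoc.
  move=> [[k Pk] e] [[k' Pk'] e'] Hxx'.
  apply: (DJ_disj cl). apply: (DJ_postK (m := f i)).
  have E1 := f_equal (fun s : {j : I & Hom _ (A j)} => compm (f (projT1 s)) (projT2 s))
    (fm_sig gk2 (exist _ (exist _ k Pk) e)).
  have E2 := f_equal (fun s : {j : I & Hom _ (A j)} => compm (f (projT1 s)) (projT2 s))
    (fm_sig gk2 (exist _ (exist _ k' Pk') e')).
  simpl in E1, E2. rewrite E1 E2.
  have Hkk : k <> k'.
    move=> Ek; subst k'. apply: Hxx'. rewrite (bool_irrelevance Pk Pk').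
    by rewrite (bool_irrelevance e e').
  case: (Hpw k k' Hkk) => [[_ Eg]|D] //.
  exfalso; apply: Eg. by move: (eqP e) (eqP e'); rewrite /g2 /= => -> ->.
- move=> x x' Hxx'. have Hkk := Hne _ _ Hxx'.
  move: x x' Hxx' Hkk => [k Pk] [k' Pk'] Hxx' /= Hkk.
  case: (Hpw k k' Hkk) => [[E Eg]|D].
    split; [by left | by move=> _].
  split; first by right; exact: (DJ_disj cl D).
  move=> E; exfalso.
  have D' := DJ_tr (esym E) D.
  have := DJ_self D'. exact: ((pbP _).1 Pk).
Qed.
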